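(* Let $X$ be a Hausdorff space and $\mathcal I$ a ccc $\sigma$-ideal on $X$ with a Borel base. Then $\mathcal I$ is $\mathcal A$-ccc for the family $\mathcal A$ of all $K$-analytic subsets of $X$; that is, every family of pairwise disjoint $K$-analytic subsets of $X$ not belonging to $\mathcal I$ is countable.
   Context: A Tychonoff space is $K$-analytic if it is a continuous image of a Lindelöf Čech-complete space; a subset is $K$-analytic if it is so in the subspace topology. A $\sigma$-ideal on $X$ is a family closed under countable unions and subsets with $X=\bigcup\mathcal I$ and $X\notin\mathcal I$. It has a Borel base if every member is contained in a Borel member. It is ccc if every family of pairwise disjoint Borel subsets of $X$ not in $\mathcal I$ is countable. *)

(* Defs.v *)
From HB Require Import structures.
From mathcomp Require Import all_boot all_order all_algebra.
From mathcomp Require Import all_classical all_reals all_analysis.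
From mathcomp Require Import borel_hierarchy.
Set Implicit Arguments. Unset Strict Implicit. Unset Printing Implicit Defensive.
Import numFieldNormedType.Exports.
Local Open Scope classical_set_scope.

Definition Borel {T : topologicalType} : set (set T) :=
  <<s [set U : set T | open U] >>.

Definition lindelof (Y : topologicalType) : Prop :=
  forall C : set (set Y), (forall U, C U -> open U) ->
    \bigcup_(U in C) U = [set: Y] ->
    exists2 D : set (set Y), D `<=` C & countable D /\ \bigcup_(U in D) U = [set: Y].

Definition embedding {Y K : topologicalType} (e : Y -> K) : Prop :=
  injective e /\ continuous e /\
  forall U : set Y, open U -> exists2 V : set K, open V & U = e @^-1` V.

(* Cech-complete: Tychonoff space which is a G_delta in some (equivalently,
   every, Engelking 3.9.1) Hausdorff compactification *)
Definition cech_complete (Y : topologicalType) : Prop :=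
  hausdorff_space Y /\ completely_regular_space Y /\
  exists (K : topologicalType) (e : Y -> K),
    [/\ compact [set: K], hausdorff_space K, embedding e & Gdelta (range e)].

Definition K_analytic {X : topologicalType} (A : set X) : Prop :=
  exists (Y : topologicalType) (f : Y -> X),
    [/\ lindelof Y, cech_complete Y, continuous f & range f = A].

Definition pairwise_disjoint {X : Type} (F : set (set X)) : Prop :=
  forall A B, F A -> F B -> A <> B -> A `&` B = set0.

Definition sigma_ideal {X : Type} (I : set (set X)) : Prop :=
  [/\ (forall A B, I A -> B `<=` A -> I B),
      (forall F : (set X)^nat, (forall n, I (F n)) -> I (\bigcup_n F n)),
      \bigcup_(A in I) A = [set: X] & ~ I [set: X]].

Definition has_Borel_base {X : topologicalType} (I : set (set X)) : Prop :=
  forall A, I A -> exists B, [/\ Borel B, I B & A `<=` B].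

Definition A_ccc {X : Type} (Acl : set (set X)) (I : set (set X)) : Prop :=
  forall F : set (set X), F `<=` Acl -> (forall A, F A -> ~ I A) ->
    pairwise_disjoint F -> countable F.

Definition ccc {X : topologicalType} (I : set (set X)) : Prop :=
  A_ccc (@Borel X) I.

(* Main.v *)
Require Import Defs.
From mathcomp Require Import all_boot all_order all_algebra.
From mathcomp Require Import all_classical all_reals all_analysis.
From mathcomp Require Import borel_hierarchy.
Set Implicit Arguments. Unset Strict Implicit. Unset Printing Implicit Defensive.
Local Open Scope classical_set_scope.


Lemma BorelC (X : topologicalType) (A : set X) : Borel A -> Borel (~` A).
Proof. by move=> h; rewrite -setTD; exact: sigma_algebraCD. Qed.

Lemma Borel_bigcup (X : topologicalType) (F : (set X)^nat) :
  (forall n, Borel (F n)) -> Borel (\bigcup_n F n).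
Proof. exact: sigma_algebra_bigcup. Qed.

Lemma Borel_open (X : topologicalType) (A : set X) : open A -> Borel A.
Proof. by move=> h; exact: sub_sigma_algebra. Qed.

Lemma Borel0 (X : topologicalType) : Borel (@set0 X).
Proof. exact: sigma_algebra0. Qed.

Lemma union2 (T : Type) (P : set (set T)) :
  P set0 -> (forall G : (set T)^nat, (forall n, P (G n)) -> P (\bigcup_n G n)) ->
  forall A B, P A -> P B -> P (A `|` B).
Proof.
move=> P0 PU A B PA PB.
have -> : A `|` B = \bigcup_n (if n is 0 then A else B).
  apply/seteqP; split=> x.
  - by case=> h; [exists 0 | exists 1].
  - by case=> -[|n] _ h; [left|right].
by apply: PU => -[|n].
Qed.

Lemma BorelU (X : topologicalType) (A B : set X) : Borel A -> Borel B -> Borel (A `|` B).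
Proof. apply: union2; [exact: Borel0 | exact: Borel_bigcup]. Qed.

Lemma BorelI (X : topologicalType) (A B : set X) : Borel A -> Borel B -> Borel (A `&` B).
Proof.
move=> hA hB; rewrite -[A `&` B]setCK setCI; apply: BorelC.
by apply: BorelU; apply: BorelC.
Qed.

Lemma BorelD (X : topologicalType) (A B : set X) : Borel A -> Borel B -> Borel (A `\` B).
Proof. by move=> hA hB; apply: BorelI => //; apply: BorelC. Qed.

Lemma Borel_closed (X : topologicalType) (A : set X) : closed A -> Borel A.
Proof.
move=> h; rewrite -[A]setCK; apply: BorelC; apply: Borel_open.
exact: closed_openC.
Qed.

Lemma cunion (T J : Type) (P : set (set T)) (D : set J) (F : J -> set T) :
  P set0 -> (forall G : (set T)^nat, (forall n, P (G n)) -> P (\bigcup_n G n)) ->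
  countable D -> (forall j, D j -> P (F j)) -> P (\bigcup_(j in D) F j).
Proof.
move=> P0 PU /countable_injP [f finj] PF.
pose G n := \bigcup_(j in [set j | D j /\ f j = n]) F j.
have -> : \bigcup_(j in D) F j = \bigcup_n G n.
  apply/seteqP; split=> x.
  - by case=> j Dj Fx; exists (f j) => //; exists j.
  - by case=> n _ [j [Dj _] Fx]; exists j.
apply: PU => n.
have [[j0 [Dj0 fj0]]|nex] := pselect (exists j, D j /\ f j = n).
- have -> : G n = F j0.
    apply/seteqP; split=> x.
    + case=> j [Dj fj] Fx.
      have e : j = j0 by apply: finj; rewrite ?inE //; rewrite fj fj0.
      by rewrite -e.
    + by move=> Fx; exists j0.
  exact: PF.
- have -> : G n = set0.
    apply/seteqP; split=> x //; case=> j [Dj fj] _.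
    by exfalso; apply: nex; exists j.
  exact: P0.
Qed.

Lemma maxdisj (T : Type) (Q : set (set T)) :
  exists G, [/\ G `<=` Q, pairwise_disjoint G &
     forall C, Q C -> (forall D, G D -> C `&` D = set0) -> G C].
Proof.
pose P := [set G : set (set T) | G `<=` Q /\ pairwise_disjoint G].
have hch : forall Fam : set (set (set T)), Fam `<=` P -> total_on Fam subset ->
    P (\bigcup_(X in Fam) X).
  move=> Fam FP Ftot; split.
  - by move=> C [G FG GC]; case: (FP G FG) => + _; apply.
  - move=> A B [G1 FG1 G1A] [G2 FG2 G2B] AB.
    have [s12|s21] := Ftot G1 G2 FG1 FG2.
    + exact: (FP G2 FG2).2 A B (s12 _ G1A) G2B AB.
    + exact: (FP G1 FG1).2 A B G1A (s21 _ G2B) AB.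
have [G [[GQ Gd] Gmax]] := Zorn_bigcup hch.
exists G; split => // C QC Cd; apply: contrapT => nGC.
apply: (Gmax (G `|` [set C])).
- split; first by move=> D GD; left.
  by move=> h; apply: nGC; apply: h; right.
- split; first by move=> D [/GQ //| ->].
  move=> A B [GA|->] [GB|->] AB //.
  + exact: Gd.
  + by rewrite setIC; apply: Cd.
  + exact: Cd.
Qed.


Lemma envelope (X : topologicalType) (I : set (set X)) :
  I set0 -> ccc I -> forall A : set X,
  exists H, [/\ Borel H, A `<=` H & forall C, Borel C -> C `<=` H `\` A -> I C].
Proof.
move=> I0 hc A.
have [G [GQ Gd Gmax]] :=
  maxdisj [set C : set X | [/\ Borel C, ~ I C & C `&` A = set0]].
have Gc : countable G.
  apply: hc => //; first by move=> C /GQ [].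
  by move=> C /GQ [].
exists (~` \bigcup_(C in G) C); split.
- apply: BorelC; apply: cunion => //; [exact: Borel0 | exact: Borel_bigcup |].
  by move=> C /GQ [].
- move=> x Ax [C GC Cx]; have [_ _ CA] := GQ C GC.
  have : (C `&` A) x by []. by rewrite CA.
- move=> C BC CH; apply: contrapT => nIC.
  have GC : G C.
    apply: Gmax.
      split => //; apply/seteqP; split => x // [Cx Ax].
      by case: (CH x Cx).
    move=> D GD; apply/seteqP; split => x // [Cx Dx].
    by case: (CH x Cx) => + _; apply; exists D.
  have C0 : C = set0.
    apply/seteqP; split=> x // Cx.
    by case: (CH x Cx) => + _; apply; exists C.
  by apply: nIC; rewrite C0.
Qed.

Lemma mkseqS0 (sg : nat -> nat) n :
  mkseq sg n.+1 = sg 0 :: mkseq (fun i => sg i.+1) n.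
Proof.
elim: n => [//|n IH].
by rewrite mkseqS IH mkseqS.
Qed.

Definition suslin (X : Type) (P : seq nat -> set X) : set X :=
  [set x | exists sg : nat -> nat, forall n, P (mkseq sg n) x].

Lemma suslin_meas (X : topologicalType) (I : set (set X)) :
  sigma_ideal I -> I set0 -> ccc I ->
  forall P : seq nat -> set X, (forall s, Borel (P s)) ->
  exists H, [/\ Borel H, suslin P `<=` H & I (H `\` suslin P)].
Proof.
move=> hI I0 hc P BP.
have [Isub IU _ _] := hI.
pose As s := [set x | exists sg : nat -> nat, forall n, P (s ++ mkseq sg n) x].
have env s := envelope I0 hc (As s).
have [Hf hHf] := choice env.
pose Hs s := Hf s `&` P s.
pose Ds s := Hs s `\` \bigcup_k Hs (rcons s k).
have AsS s : As s `<=` \bigcup_k As (rcons s k).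
  move=> x [sg hsg]; exists (sg 0) => //; exists (fun i => sg i.+1) => n.
  by rewrite cat_rcons -mkseqS0.
have AsP s : As s `<=` P s.
  by move=> x [sg /(_ 0)]; rewrite cats0.
have AsH s : As s `<=` Hs s.
  move=> x Ax; split; last exact: AsP.
  by have [_ + _] := hHf s; apply.
have BH s : Borel (Hs s).
  by apply: BorelI => //; have [] := hHf s.
have ID s : I (Ds s).
  have [_ _ h] := hHf s; apply: h.
    by apply: BorelD => //; apply: Borel_bigcup.
  move=> x [[Hx Px] nU]; split => // Ax.
  have [k _ Ak] := AsS s x Ax.
  by apply: nU; exists k => //; apply: AsH.
exists (Hs [::]); split => //.
- by move=> x [sg hsg]; apply: AsH; exists sg.
apply: (Isub (\bigcup_(s in [set: seq nat]) Ds s)).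
  apply: cunion.
  - exact: I0.
  - by move=> F hF; apply: IU.
  - exact: countableP.
  - by move=> s _; apply: ID.
move=> x [Hx nA]; apply: contrapT => nU.
have step : forall s, exists k, Hs s x -> Hs (rcons s k) x.
  move=> s; have [[k _ hk]|nk] := pselect ((\bigcup_k Hs (rcons s k)) x).
    by exists k.
  exists 0 => hs; exfalso; apply: nU; exists s => //.
have [g hg] := choice step.
pose pre := fix pre n := if n is m.+1 then rcons (pre m) (g (pre m)) else [::].
pose sg n := g (pre n).
have preE n : pre n = mkseq sg n.
  by elim: n => [//|n IH]; rewrite mkseqS -IH.
have preH n : Hs (pre n) x.
  by elim: n => [//|n IH]; apply: hg.
apply: nA; exists sg => n; rewrite -preE.
by have [] := preH n.
Qed.


Lemma cover_seq (Y K : topologicalType) (e : Y -> K) (G : set K) :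
  lindelof Y -> compact [set: K] -> hausdorff_space K -> continuous e ->
  open G -> range e `<=` G ->
  exists E : nat -> set K, (forall k, closure (E k) `<=` G) /\
    (forall y, exists k, E k (e y)).
Proof.
move=> hL cK hK econt oG reG.
pose C := [set U : set Y | exists W : set K,
  [/\ open W, closure W `<=` G & U = e @^-1` W]].
have Cop : forall U, C U -> open U.
  by move=> U [W [oW _ ->]]; apply: (proj1 (continuousP e) econt).
have Ccov : \bigcup_(U in C) U = [set: Y].
  apply/seteqP; split => // y _.
  have nG : nbhs (e y) G by apply: open_nbhs_nbhs; split => //; apply: reG; exists y.
  have hreg : {for e y, regular_space K}.
    by apply: (compact_regular hK cK); exact: filterT.
  have [V nV cV] := hreg G nG.
  exists (e @^-1` (interior V)) => //.
  exists (interior V); split => //; first exact: open_interior.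
  by apply: subset_trans cV; apply: closureS; apply: interior_subset.
have [D DC [Dc Dcov]] := hL C Cop Ccov.
have wex : forall U, exists W : set K, C U ->
    [/\ open W, closure W `<=` G & U = e @^-1` W].
  move=> U; have [[W hW]|nC] := pselect (C U); first by exists W.
  by exists set0.
have [wf hwf] := choice wex.
have [h hinj] := countable_injP _ Dc.
pose E k := \bigcup_(U in [set U | D U /\ h U = k]) wf U.
exists E; split.
- move=> k.
  have [[U0 [DU0 hU0]]|nex] := pselect (exists U, D U /\ h U = k).
  + have -> : E k = wf U0.
      apply/seteqP; split => z.
      * case=> U [DU hU] wz.
        have eU : U = U0 by apply: hinj; rewrite ?inE //; rewrite hU hU0.
        by rewrite -eU.
      * by move=> wz; exists U0.
    by case: (hwf U0 (DC _ DU0)).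
  + have -> : E k = set0.
      apply/seteqP; split => z //; case=> U [DU hU] _.
      by exfalso; apply: nex; exists U.
    by rewrite closure0.
- move=> y.
  have : (\bigcup_(U in D) U) y by rewrite Dcov.
  case=> U DU Uy; exists (h U); exists U => //.
  have [_ _ eU] := hwf U (DC _ DU).
  by move: Uy; rewrite {1}eU.
Qed.


Lemma Kanalytic_suslin (X : topologicalType) (A : set X) :
  hausdorff_space X -> K_analytic A ->
  exists P : seq nat -> set X, (forall s, closed (P s)) /\ A = suslin P.
Proof.
move=> hX [Y [f [hL [hY [hcr [K [e [cK hK [einj [econt eopen]] [G oG reG]]]]]] fc rf]]].
have cov n : exists E : nat -> set K, (forall k, closure (E k) `<=` G n) /\
    (forall y, exists k, E k (e y)).
  apply: cover_seq => //.
  move=> z rz; have hz : (\bigcap_i G i) z by rewrite -reG.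
  exact: (hz n Logic.I).
have [E hE] := choice cov.
pose Ys (s : seq nat) := [set y | forall i, (i < size s)%N -> E i (nth 0%N s i) (e y)].
exists (fun s => closure (f @` Ys s)); split.
  by move=> s; exact: closed_closure.
rewrite -rf; apply/seteqP; split.
  move=> _ [y _ <-].
  have [sg hsg] := choice (fun i => (hE i).2 y).
  exists sg => n; apply: subset_closure; exists y => //.
  by move=> i; rewrite size_mkseq => lt; rewrite nth_mkseq.
move=> x [sg hsg].
pose T n := [set y | forall i, (i < n)%N -> E i (sg i) (e y)].
have YT n : Ys (mkseq sg n) = T n.
  apply/seteqP; split => y hy i lt.
  - by have := hy i; rewrite size_mkseq nth_mkseq //; apply.
  - by rewrite size_mkseq in lt; rewrite nth_mkseq //; apply: hy.
pose Dn := [set p : nat * set X | nbhs x p.2].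
pose B (p : nat * set X) := e @` (T p.1 `&` f @^-1` p.2).
have FF : Filter (filter_from Dn B).
  apply: filter_from_filter.
    by exists (0%N, setT); exact: filterT.
  move=> i j Di Dj; exists (maxn i.1 j.1, i.2 `&` j.2).
    by rewrite /Dn /=; exact: filterI.
  move=> _ [y [Ty [fi fj]] <-]; split.
  - exists y => //; split => // k lt; apply: Ty.
    by apply: (leq_trans lt); apply: leq_maxl.
  - exists y => //; split => // k lt; apply: Ty.
    by apply: (leq_trans lt); apply: leq_maxr.
have PF : ProperFilter (filter_from Dn B).
  apply: filter_from_proper => // -[n O] DO.
  have := hsg n O DO; rewrite YT => -[_ [[y Ty <-] fO]].
  by exists (e y); exists y.
have [z [_ cz]] := cK _ PF (@filterT _ _ FF).
have zG : (\bigcap_i G i) z.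
  move=> i _; apply: (proj1 (hE i) (sg i)) => W nW.
  have FB : filter_from Dn B (B (i.+1, setT)).
    by exists (i.+1, setT) => //; exact: filterT.
  have [w [[y [Ty _] <-] Wy]] := cz _ _ FB nW.
  by exists (e y); split => //; apply: Ty.
have [y _ ey] : range e z by rewrite reG.
exists y => //; apply: hX => A' B' nA' nB'.
have nfA : nbhs y (f @^-1` A') by exact: fc.
have [U [oU Uy] UA] : exists2 U, open_nbhs y U & U `<=` f @^-1` A'.
  by move: nfA; rewrite nbhsE.
have [V oV UV] := eopen U oU.
have nV : nbhs z V.
  apply: open_nbhs_nbhs; split => //.
  by rewrite -ey; move: Uy; rewrite UV.
have FB : filter_from Dn B (B (0%N, B')) by exists (0%N, B').
have [w [[y' [_ fB] <-] Vw]] := cz _ _ FB nV.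
exists (f y'); split => //; apply: UA.
by rewrite UV.
Qed.


Theorem lemma4p5 (X : topologicalType) (I : set (set X)) :
  hausdorff_space X -> sigma_ideal I -> has_Borel_base I -> ccc I ->
  A_ccc (@K_analytic X) I.
Proof.
move=> hX hI hB hc F FK FnI Fd.
have [Isub IU Icov IX] := hI.
have [[x0 _]|nx] := pselect (exists x : X, True); last first.
  apply: (card_le_trans _ (countable1 (@set0 X))); apply: subset_card_le.
  move=> A _; apply/seteqP; split => x // _; apply: nx; by exists x.
have I0 : I set0.
  have : (\bigcup_(A in I) A) x0 by rewrite Icov.
  by case=> A IA _; apply: (Isub A) => //; exact: sub0set.
have meas : forall A, exists b, F A -> [/\ Borel b, A `<=` b & I (b `\` A)].
  move=> A; have [FA|nF] := pselect (F A); last by exists set0.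
  have [P [Pc ->]] := Kanalytic_suslin hX (FK A FA).
  have [H [BH sH IH]] := suslin_meas hI I0 hc (fun s => Borel_closed (Pc s)).
  by exists H.
have [bf hbf] := choice meas.
have [G [GQ Gd Gmax]] := maxdisj
  [set C | [/\ Borel C, ~ I C & exists A, F A /\ C `<=` bf A]].
have Gc : countable G.
  apply: hc => //; first by move=> C /GQ [].
  by move=> C /GQ [].
have oex : forall C, exists A, G C -> F A /\ C `<=` bf A.
  move=> C; have [GC|nG] := pselect (G C); last by exists set0.
  by have [_ _ [A hA]] := GQ C GC; exists A.
have [oA hoA] := choice oex.
have IU2 := union2 I0 IU.
have BG : Borel (\bigcup_(C in G) C).
  apply: cunion => //; [exact: Borel0 | exact: Borel_bigcup |].
  by move=> C /GQ [].
apply: (card_le_trans _ (card_le_trans (card_image_le oA G) Gc)).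
apply: subset_card_le => A FA; apply: contrapT => nimg.
exfalso; apply: (FnI A FA).
have [BbA AbA IbA] := hbf A FA.
apply: (Isub (bf A)) => //.
have IR : I (bf A `\` \bigcup_(C in G) C).
  apply: contrapT => nIR.
  have GR : G (bf A `\` \bigcup_(C in G) C).
    apply: Gmax.
      split; [exact: BorelD | exact: nIR | exists A; split => //].
    move=> D GD; apply/seteqP; split => z // [[_ nU] Dz].
    by apply: nU; exists D.
  have R0 : bf A `\` \bigcup_(C in G) C = set0.
    apply/seteqP; split => z // [bz nU].
    by apply: (nU); exists (bf A `\` \bigcup_(C in G) C).
  by apply: nIR; rewrite R0.
have IC : I (\bigcup_(C in G) (bf A `&` C)).
  apply: cunion => // C GC.
  have [FA' CA'] := hoA C GC.
  have AA' : A <> oA C by move=> eA; apply: nimg; exists C.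
  have [_ _ IbA'] := hbf _ FA'.
  apply: (Isub _ _ (IU2 _ _ IbA IbA')).
  move=> z [bz Cz].
  have [Az|nAz] := pselect (A z); last by left.
  right; split; first exact: CA'.
  move=> A'z.
  have : (A `&` oA C) z by [].
  by rewrite (Fd _ _ FA FA' AA').
apply: (Isub _ _ (IU2 _ _ IR IC)).
move=> z bz.
have [[C GC Cz]|nU] := pselect ((\bigcup_(C in G) C) z).
  by right; exists C.
by left.
Qed.
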